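(* Let $G=\mathbb{Z}_2$ or $G=\mathbb{Z}_2\times\mathbb{Z}_2$ and $m\ge3$. Then the set $Y_{G,m}$ defined in the context is not convex.
   Context: $G$ is written additively with identity $0$; for $G=\mathbb{Z}_2$ the characters are $\hat g(h)=(-1)^{gh}$, and for $G=\mathbb{Z}_2\times\mathbb{Z}_2$ they are $\widehat{(a,b)}((c,d))=(-1)^{ac+bd}$. For $\mathbf g,\mathbf h\in G^m$ let $\widehat{\mathbf g}(\mathbf h)=\prod_{x=1}^m\hat g_x(h_x)$. Let $\Delta$ be the probability simplex in $\mathbb{R}^{G^m}$ and let $q$-space be $\{H\mathbf p:\mathbf p\in\Delta\}$, where $(H\mathbf p)_{\mathbf g}=\sum_{\mathbf h\in G^m}\widehat{\mathbf g}(\mathbf h)p_{\mathbf h}$. A split is a bipartition of the taxon set $\{1,\dots,m\}$ into two nonempty parts; for a split $s$, $\Lambda(s)$ denotes the part not containing taxon $m$. For a split $s$ and $h\in G$, $\boldsymbol\rho(s,h)\in G^m$ assigns $h$ to each taxon in $\Lambda(s)$ and $0$ to the others. $Y_{G,m}$ is the set of points $\mathbf q$ of $q$-space such that for every split $s$ and every $h\in G\setminus\{0\}$, $$\prod_{\mathbf g\in G^m:\ \widehat{\boldsymbol\rho(s,h)}(\mathbf g)=1} q_{\mathbf g}\ \ge\ \prod_{\mathbf g\in G^m:\ \widehat{\boldsymbol\rho(s,h)}(\mathbf g)=-1} q_{\mathbf g}.$$ *)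

(* Defs.v *)
From HB Require Import structures.
From mathcomp Require Import all_boot all_order all_algebra.
Set Implicit Arguments. Unset Strict Implicit. Unset Printing Implicit Defensive.
Import Order.TTheory GRing.Theory Num.Theory.
Local Open Scope ring_scope.

Section Defs.
Variable R : realFieldType.

Definition chiZ2 (g h : 'Z_2) : R := (-1) ^+ (val g * val h)%N.

Definition chiZ22 (g h : 'Z_2 * 'Z_2) : R :=
  (-1) ^+ (val g.1 * val h.1 + val g.2 * val h.2)%N.

Variable G : finType.
Variable chi : G -> G -> R.
Variable zero : G.
Variable m : nat.

Definition Gm := {ffun 'I_m -> G}.

Definition chiv (g h : Gm) : R := \prod_(x < m) chi (g x) (h x).

Definition qspace (q : {ffun Gm -> R}) : Prop :=
  exists p : {ffun Gm -> R},
    [/\ forall h, 0 <= p h, \sum_h p h = 1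
      & forall g, q g = \sum_h chiv g h * p h].

(* Taxa are 'I_m; taxon m is the index with value m.-1.
   A split s is given by Lambda(s): a nonempty set of taxa not containing
   taxon m (the other part then contains taxon m, hence is nonempty). *)
Definition is_Lambda (A : {set 'I_m}) : bool :=
  (A != set0) && [forall x in A, val x != m.-1].

Definition rho (A : {set 'I_m}) (h : G) : Gm :=
  [ffun x => if x \in A then h else zero].

Definition Y (q : {ffun Gm -> R}) : Prop :=
  qspace q /\
  forall A : {set 'I_m}, is_Lambda A -> forall h : G, h != zero ->
    \prod_(g : Gm | chiv (rho A h) g == -1) q g
      <= \prod_(g : Gm | chiv (rho A h) g == 1) q g.

End Defs.

Definition convex_set (R : realFieldType) (T : finType) (S : {ffun T -> R} -> Prop) : Prop :=
  forall q1 q2 : {ffun T -> R}, S q1 -> S q2 ->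
    forall t : R, 0 <= t -> t <= 1 ->
      S [ffun g => t * q1 g + (1 - t) * q2 g].

(* Main.v *)
Require Import Defs.
From HB Require Import structures.
From mathcomp Require Import all_boot all_order all_algebra.
Set Implicit Arguments. Unset Strict Implicit. Unset Printing Implicit Defensive.
Import Order.TTheory GRing.Theory Num.Theory.
Local Open Scope ring_scope.

Section Gen.
Variable R : realFieldType.
Variable G : finType.
Variable chi : G -> G -> R.
Variables zero one : G.
Variable n : nat.
Hypothesis chiC : forall a b, chi a b = chi b a.
Hypothesis chi0 : forall b, chi zero b = 1.
Hypothesis chipm : forall a b, chi a b = 1 \/ chi a b = -1.
Hypothesis chione : chi one one = -1.
Hypothesis chiex : forall h, h != zero -> exists h', chi h h' = -1.

Local Notation m := n.+2.
Local Notation GM := (Gm G m).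
Local Notation first := (ord0 : 'I_m).
Local Notation last := (ord_max : 'I_m).

Lemma chi0r b : chi b zero = 1. Proof. by rewrite chiC chi0. Qed.

Lemma first_last : first != last. Proof. by []. Qed.

Lemma N1_neq1 : (-1 : R) != 1.
Proof. by rewrite lt_eqF // (lt_trans (ltrN10 R)) ?ltr01. Qed.

Lemma one_zero : one != zero.
Proof. apply/eqP => e; move: chione; rewrite {1}e chi0 => /eqP; by rewrite eq_sym (negbTE N1_neq1). Qed.

Lemma chivE (g : GM) (S : {set 'I_m}) :
  chiv chi g [ffun x => if x \in S then one else zero] = \prod_(x in S) chi (g x) one.
Proof.
rewrite /chiv [RHS]big_mkcond; apply eq_bigr => x _; rewrite ffunE.
by case: (x \in S) => //; rewrite chi0r.
Qed.

Lemma chiv_rho (A : {set 'I_m}) h (g : GM) :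
  chiv chi (rho zero A h) g = \prod_(x in A) chi h (g x).
Proof.
rewrite /chiv [RHS]big_mkcond; apply eq_bigr => x _; rewrite ffunE.
by case: (x \in A) => //; rewrite chi0.
Qed.

Lemma modify (A : {set 'I_m}) (hA : last \notin A) h (F : G -> G) (w : GM) :
  exists g : GM, \prod_(x in A) chi h (g x) = \prod_(x in A) chi h (w x) /\ g last = F (g first).
Proof.
exists [ffun x => if x == last then F (w first) else w x]; split.
  apply eq_bigr => x xA; rewrite ffunE; case: eqP => // ex.
  by move: hA; rewrite -ex xA.
by rewrite !ffunE eqxx (negbTE first_last).
Qed.

Lemma witness (A : {set 'I_m}) h s (hA : is_Lambda A) (hh : h != zero)
  (hs : s = 1 \/ s = -1) (F : G -> G) :
  exists g : GM, chiv chi (rho zero A h) g = s /\ g last = F (g first).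
Proof.
case/andP: hA => /set0Pn [x0 x0A] /forall_inP hl.
have lA : last \notin A.
  by apply/negP => /hl /=; rewrite eqxx.
suff [w hw] : exists w : GM, \prod_(x in A) chi h (w x) = s.
  have [g [hg1 hg2]] := modify lA h F w.
  by exists g; rewrite chiv_rho hg1 hw.
case: hs => ->.
  exists [ffun => zero]; apply big1 => x _; by rewrite ffunE chi0r.
have [h' hh'] := chiex hh.
exists [ffun x => if x == x0 then h' else zero].
rewrite (bigD1 x0) //= ffunE eqxx hh' big1 ?mulr1 // => x /andP [_ /negbTE nx].
by rewrite ffunE nx chi0r.
Qed.

Lemma prod0 (q : {ffun GM -> R}) (P : pred GM) :
  (exists g, P g /\ q g = 0) -> \prod_(g | P g) q g = 0.
Proof. by case=> g [Pg qg]; rewrite (bigD1 g) //= qg mul0r. Qed.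

Lemma sum_delta (f : GM -> R) (a : GM) : \sum_h f h * (h == a)%:R = f a.
Proof.
rewrite (bigD1 a) //= eqxx mulr1 big1 ?addr0 // => h /negbTE ->.
by rewrite mulr0.
Qed.

Lemma qspace_pair (a b : GM) : a != b ->
  qspace chi [ffun g => 2^-1 * (chiv chi g a + chiv chi g b)].
Proof.
move=> ab.
exists [ffun h => 2^-1 * ((h == a)%:R + (h == b)%:R)]; split.
- move=> h; rewrite ffunE mulr_ge0 // ?invr_ge0 ?ler0n // addr_ge0 // ler0n.
- under eq_bigr do rewrite ffunE.
  rewrite -mulr_sumr big_split /=.
  have E : forall c : GM, \sum_(i : GM) ((i == c)%:R : R) = 1.
    move=> c; rewrite (bigD1 c) //= eqxx big1 ?addr0 // => i /negbTE -> //.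
  by rewrite !E mulVf // pnatr_eq0.
- move=> g; rewrite ffunE.
  under eq_bigr do rewrite ffunE mulrCA mulrDr.
  rewrite -mulr_sumr big_split /= !sum_delta //.
Qed.

Definition zf : GM := [ffun x => if x \in (set0 : {set 'I_m}) then one else zero].
Definition uf : GM := [ffun x => if x \in [set last] then one else zero].
Definition vf : GM := [ffun x => if x \in [set first; last] then one else zero].

Lemma zfE g : chiv chi g zf = 1. Proof. by rewrite /zf chivE big_set0. Qed.
Lemma ufE g : chiv chi g uf = chi (g last) one. Proof. by rewrite /uf chivE big_set1. Qed.
Lemma vfE g : chiv chi g vf = chi (g first) one * chi (g last) one.
Proof.
rewrite /vf chivE big_setU1 ?big_set1 //= in_set1 first_last //.
Qed.

Lemma zf_uf : zf != uf.
Proof.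
apply/eqP => /(congr1 (fun f : GM => f last)); rewrite !ffunE in_set0 in_set1 eqxx.
by move=> e; move: one_zero; rewrite e eqxx.
Qed.

Lemma zf_vf : zf != vf.
Proof.
apply/eqP => /(congr1 (fun f : GM => f last)); rewrite !ffunE in_set0 !inE eqxx orbT.
by move=> e; move: one_zero; rewrite e eqxx.
Qed.

Definition q1 : {ffun GM -> R} := [ffun g => 2^-1 * (chiv chi g zf + chiv chi g uf)].
Definition q2 : {ffun GM -> R} := [ffun g => 2^-1 * (chiv chi g zf + chiv chi g vf)].

Lemma Yprod (q : {ffun GM -> R}) :
  (forall A h s, is_Lambda A -> h != zero -> s = 1 \/ s = -1 ->
    exists g : GM, chiv chi (rho zero A h) g = s /\ q g = 0) ->
  forall A : {set 'I_m}, is_Lambda A -> forall h : G, h != zero ->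
    \prod_(g : GM | chiv chi (rho zero A h) g == -1) q g
      <= \prod_(g : GM | chiv chi (rho zero A h) g == 1) q g.
Proof.
move=> H A hA h hh.
rewrite !prod0 //.
  by have [g [e1 e2]] := H A h 1 hA hh (or_introl erefl); exists g; rewrite e1 eqxx.
by have [g [e1 e2]] := H A h (-1) hA hh (or_intror erefl); exists g; rewrite e1 eqxx.
Qed.

Lemma Yq1 : Y chi zero q1.
Proof.
split; first exact: qspace_pair zf_uf.
apply: Yprod => A h s hA hh hs.
have [g [e1 e2]] := witness hA hh hs (fun _ => one).
by exists g; split=> //; rewrite ffunE zfE ufE e2 chione subrr mulr0.
Qed.

Lemma Yq2 : Y chi zero q2.
Proof.
split; first exact: qspace_pair zf_vf.
apply: Yprod => A h s hA hh hs.
have [g [e1 e2]] := witness hA hh hs (fun y => if chi y one == 1 then one else zero).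
exists g; split=> //; rewrite ffunE zfE vfE e2.
case: (chipm (g first) one) => ->.
  by rewrite eqxx chione mul1r subrr mulr0.
by rewrite (negbTE N1_neq1) chi0 mulr1 subrr mulr0.
Qed.

Lemma half_pos : (0 : R) < 2^-1. Proof. by rewrite invr_gt0 ltr0n. Qed.
Lemma one_half : (1 : R) - 2^-1 = 2^-1.
Proof. by rewrite {1}(splitr (1 : R)) mul1r addrK. Qed.

Theorem not_convex : ~ convex_set (@Y R G chi zero m).
Proof.
move=> cv.
have := cv _ _ Yq1 Yq2 (2^-1) (ltW half_pos).
have h1 : (2^-1 : R) <= 1.
  by rewrite invf_le1 ?ltr0n // ler1n.
move=> /(_ h1) [_ HY].
have hL : is_Lambda [set first].
  apply/andP; split; first by apply/set0Pn; exists first; rewrite in_set1.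
  by apply/forall_inP => x; rewrite in_set1 => /eqP ->.
have := HY _ hL one one_zero.
set q3 := [ffun g => _].
rewrite [X in _ <= X]prod0; last first.
  exists [ffun x => if x == last then one else zero]; split.
    by rewrite chiv_rho big_set1 ffunE (negbTE first_last) chi0r.
  rewrite /q3 ffunE one_half /q1 /q2 !ffunE zfE ufE vfE !ffunE eqxx (negbTE first_last).
  by rewrite chione chi0 mul1r subrr !mulr0 addr0.
apply/negP; rewrite -ltNge; apply: prodr_gt0 => g.
rewrite chiv_rho big_set1 => /eqP e.
rewrite /q3 ffunE one_half /q1 /q2 !ffunE zfE ufE vfE.
have e' : chi (g first) one = -1 by rewrite chiC.
rewrite e'.
case: (chipm (g last) one) => ->.
  rewrite mulN1r subrr !mulr0 addr0; apply: mulr_gt0; first exact: half_pos.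
  by apply: mulr_gt0; [exact: half_pos | exact: addr_gt0 ltr01 ltr01].
rewrite subrr !mulr0 add0r mulrNN mulr1; apply: mulr_gt0; first exact: half_pos.
by apply: mulr_gt0; [exact: half_pos | exact: addr_gt0 ltr01 ltr01].
Qed.

End Gen.
Lemma pmk (R : realFieldType) k : (-1 : R) ^+ k = 1 \/ (-1 : R) ^+ k = -1.
Proof. rewrite -signr_odd; case: (odd k); [right|left]; by rewrite ?expr1 ?expr0. Qed.

Lemma Z2_cases (x : 'Z_2) : x = 0 \/ x = 1.
Proof. case: x => [[|[|k]] Hk]; [left|right|]; try by apply/val_inj. by []. Qed.

Lemma inst1 (R : rcfType) n : ~ convex_set (@Y R _ (@chiZ2 R) (0 : 'Z_2) n.+2).
Proof.
apply: (@not_convex R _ (@chiZ2 R) 0 1).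
- by move=> a b; rewrite /chiZ2 mulnC.
- by move=> b; rewrite /chiZ2 /= mul0n expr0.
- by move=> a b; apply: pmk.
- by rewrite /chiZ2 /= expr1.
- move=> h; case: (Z2_cases h) => -> //; exists 1; by rewrite /chiZ2 /= expr1.
Qed.

Lemma inst2 (R : rcfType) n : ~ convex_set (@Y R _ (@chiZ22 R) ((0 : 'Z_2), (0 : 'Z_2)) n.+2).
Proof.
apply: (@not_convex R _ (@chiZ22 R) (0,0) (1,0)).
- by move=> a b; rewrite /chiZ22 mulnC [(val b.2 * _)%N]mulnC.
- by move=> b; rewrite /chiZ22 /= !mul0n expr0.
- by move=> a b; apply: pmk.
- by rewrite /chiZ22 /= expr1.
- move=> [a b]; case: (Z2_cases a) => ->; case: (Z2_cases b) => -> //= _.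
  + by exists (0,1); rewrite /chiZ22 /= expr1.
  + by exists (1,0); rewrite /chiZ22 /= expr1.
  + by exists (1,0); rewrite /chiZ22 /= expr1.
Qed.

Theorem mainTheorem10 (R : rcfType) (m : nat) (hm : (3 <= m)%N) :
  ~ convex_set (@Y R _ (@chiZ2 R) (0 : 'Z_2) m) /\
  ~ convex_set (@Y R _ (@chiZ22 R) ((0 : 'Z_2), (0 : 'Z_2)) m).
Proof.
case: m hm => [|[|n]] // _.
by split; [apply: inst1 | apply: inst2].
Qed.
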